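(* Let $n\ge 3$ and let $W_n^0$ be the wheel graph: vertex set $\{0,1,\dots,n\}$, edges $\{i,i+1\}$ for $1\le i<n$, the edge $\{n,1\}$, and the edges $\{0,i\}$ for $i\in[n]$ (all simple), rooted at the sink $0$. A configuration $c=(c_1,\dots,c_n)$ on $W_n^0$ is strongly recurrent if and only if $c\in\{1,2\}^n$ and $|\{i\in[n]: c_i=1\}|\le 1$. In particular $|\mathrm{SR}(W_n^0)|=|\mathrm{PPF}(W_n^0)|=n+1$.
   Context: For a rooted graph $G=(\Gamma,s)$ (finite, undirected, loopless multigraph with sink $s$), $V$ is the vertex set, $\tilde V=V\setminus\{s\}$, $\mathrm{mult}(vw)$ the number of edges between $v,w$, $\deg^A(v)=\sum_{w\in A}\mathrm{mult}(vw)$, $\deg(v)=\deg^V(v)$, $\mathbf 1_w$ the indicator of $w$. A configuration is $c:\tilde V\to\mathbb{Z}$ (written $c_i=c(i)$); stable if $c(v)<\deg(v)$ for all $v$. A stable $c$ is recurrent if there is no nonempty $F\subseteq\tilde V$ with $c(v)<\deg^F(v)$ for all $v\in F$. $V_M(c)=\{v\in\tilde V: c(v)\ge\deg(v)-\mathrm{mult}(vs)\}$; $c^{v-}=c-\sum_{w\in\tilde V\setminus\{v\}}\mathrm{mult}(ws)\mathbf 1_w$. A recurrent $c$ is strongly recurrent if $c^{v-}$ is recurrent for all $v\in V_M(c)$; $\mathrm{SR}(G)$ is their set. A $G$-parking function is $p:\tilde V\to\{1,2,\dots\}$ such that every nonempty $S\subseteq\tilde V$ contains $v$ with $p(v)\le\deg^{V\setminus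 S}(v)$. With $G^A$ the induced subgraph on $A\cup\{s\}$ rooted at $s$, $p$ is decomposable w.r.t. an ordered partition $(A,B)$ of $\tilde V$ into nonempty blocks if $p|_A$ is a $G^A$-parking function and $v\mapsto p(v)-\deg^A(v)$ on $B$ is a $G^B$-parking function; $p$ is prime if it is decomposable w.r.t. no such partition; $\mathrm{PPF}(G)$ is the set of prime $G$-parking functions. *)

(* Defs.v *)
From mathcomp Require Import all_boot all_order all_algebra.
Set Implicit Arguments. Unset Strict Implicit. Unset Printing Implicit Defensive.
Import Order.TTheory GRing.Theory Num.Theory.
Local Open Scope ring_scope.

(* A rooted multigraph is encoded on the vertex type [option T]:
   the sink s is [None], the non-sink vertices (tilde V) are [Some v], v : T.
   [mult x y] is the number of edges between x and y. *)
Section RootedGraph.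
Variable T : finType.
Variable mult : option T -> option T -> nat.

Definition degA (A : {set T}) (v : T) : int :=
  (\sum_(w in A) mult (Some v) (Some w))%:Z.

Definition deg (v : T) : int := (\sum_(w : option T) mult (Some v) w)%:Z.

Definition mults (v : T) : int := (mult (Some v) None)%:Z.

Definition stable (c : T -> int) : Prop := forall v, c v < deg v.

Definition recurrent (c : T -> int) : Prop :=
  stable c /\
  ~ (exists F : {set T}, F != set0 /\ forall v, v \in F -> c v < degA F v).

Definition VM (c : T -> int) : {set T} :=
  [set v | deg v - mults v <= c v].

Definition cminus (c : T -> int) (v : T) : T -> int :=
  fun u => if u == v then c u else c u - mults u.

Definition strongly_recurrent (c : T -> int) : Prop :=
  recurrent c /\ forall v, v \in VM c -> recurrent (cminus c v).

(* p restricted to A is a G^A-parking function, where G^A is the subgraph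
   induced on A ∪ {s}, rooted at s: p(v) >= 1 on A, and every nonempty
   S ⊆ A contains v with p(v) <= deg^{(A ∪ {s}) \ S}(v)
   = mult(vs) + deg^{A \ S}(v). *)
Definition parking_on (A : {set T}) (p : T -> int) : Prop :=
  (forall v, v \in A -> 1 <= p v) /\
  forall S : {set T}, S \subset A -> S != set0 ->
    exists2 v, v \in S & p v <= mults v + degA (A :\: S) v.

Definition parking (p : T -> nat) : Prop :=
  parking_on [set: T] (fun v => (p v)%:Z).

Definition decomposable (A : {set T}) (p : T -> nat) : Prop :=
  parking_on A (fun v => (p v)%:Z) /\
  parking_on (~: A) (fun v => (p v)%:Z - degA A v).

Definition prime_parking (p : T -> nat) : Prop :=
  parking p /\
  forall A : {set T}, A != set0 -> ~: A != set0 -> ~ decomposable A p.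

End RootedGraph.

(* Wheel graph W_n^0: sink 0 = None, vertex i+1 = Some i (i : 'I_n).
   Rim edges {i, i+1} (cyclically), spokes {0, i}; all simple. *)

Definition wheel (n : nat) (x y : option 'I_n) : nat :=
  match x, y with
  | None, None => 0%N
  | None, Some _ | Some _, None => 1%N
  | Some i, Some j =>
      ((i != j) && ((j == (i.+1 %% n)%N :> nat) || (i == (j.+1 %% n)%N :> nat)))%N
  end.
Arguments wheel n x y : clear implicits.

(* Main.v *)
Require Import Defs.
From mathcomp Require Import all_boot all_order all_algebra.
From mathcomp Require Import zify.
Import Order.TTheory GRing.Theory Num.Theory.
Local Open Scope ring_scope.

Lemma sopt (T : finType) (F : option T -> nat) :
  (\sum_(w : option T) F w = F None + \sum_(i : T) F (Some i))%N.
Proof.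
case: (pickP T) => [x0 _|h0].
  rewrite (bigD1 None) //=; congr (_ + _)%N.
  rewrite (reindex (@Some T)) /=; first by apply: eq_bigl.
  exists (odflt x0) => // -[] //.
rewrite (bigD1 None) //= big1 ?big_pred0 // => -[x|] //; by have := h0 x.
Qed.


Section W.
Variable N : nat.
Hypothesis hN : (3 <= N)%N.
Local Notation T := ('I_N).

Lemma valS (i : T) : val (ordS i) = if (i.+1 < N)%N then i.+1 else 0%N.
Proof.
rewrite /= ; case: ltnP => h; first by rewrite modn_small.
have -> : i.+1 = N by have := ltn_ord i; lia.
by rewrite modnn.
Qed.

Lemma valP (i : T) : val (ord_pred i) = if (val i == 0)%N then N.-1 else (val i).-1.
Proof.
rewrite /=; case: eqP => h.
  rewrite h add0n modn_small //; lia.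
have -> : ((i + N).-1 = (i.-1) + N)%N by lia.
rewrite modnDr modn_small //; have := ltn_ord i; lia.
Qed.

Lemma adjE (v w : T) : wheel N (Some v) (Some w) = ((w == ordS v) + (w == ord_pred v))%N.
Proof.
rewrite /wheel.
have e1 : (val w == (v.+1 %% N)%N) = (val w == if (v.+1 < N)%N then v.+1 else 0%N) by rewrite -valS.
have e0 : (w == ordS v) = (val w == if (v.+1 < N)%N then v.+1 else 0%N) by rewrite -valS val_eqE.
have e2 : (w == ord_pred v) = (val w == if (val v == 0)%N then N.-1 else (val v).-1) by rewrite -valP val_eqE.
have e3 : (val v == (w.+1 %% N)%N) = (val v == if (w.+1 < N)%N then w.+1 else 0%N) by rewrite -valS.
rewrite e0 e1 e2 e3 -[v == w]val_eqE /=; clear e0 e1 e2 e3.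
case: v w => a ha [b hb] /=.
repeat (case: ifP => ?); repeat (case: eqP => ?); simpl; lia.
Qed.


Lemma ordS_neq (v : T) : ordS v != v.
Proof. rewrite -val_eqE valS; case: v => a ha /=; case: ifP => h; lia. Qed.
Lemma ordP_neq (v : T) : ord_pred v != v.
Proof. rewrite -val_eqE valP; case: v => a ha /=; case: ifP => h; lia. Qed.
Lemma ordSP_neq (v : T) : ordS v != ord_pred v.
Proof. rewrite -val_eqE valP valS; case: v => a ha /=; case: ifP => h; case: ifP => h'; lia. Qed.

Lemma sum_eq1 (A : {set T}) (x : T) : (\sum_(w in A) (w == x) = (x \in A))%N.
Proof.
case: (boolP (x \in A)) => h.
  rewrite (bigD1 x) //= eqxx big1 // => w /andP[_ /negbTE ->] //.
rewrite big1 // => w wA; case: eqP => // e; by rewrite -e wA in h.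
Qed.

Lemma degAE (F : {set T}) (v : T) :
  degA (wheel N) F v = ((ordS v \in F) + (ord_pred v \in F))%N%:Z.
Proof.
rewrite /degA; congr (_%:Z).
under eq_bigr do rewrite adjE.
by rewrite big_split /= !sum_eq1.
Qed.

Lemma degE (v : T) : deg (wheel N) v = 3.
Proof.
rewrite /deg sopt /=.
have -> : (\sum_(i : T) wheel N (Some v) (Some i) = \sum_(i in [set: T]) wheel N (Some v) (Some i))%N.
  by apply: eq_bigl => i; rewrite inE.
have := degAE [set: T] v; rewrite /degA => /eqP; rewrite eqz_nat => /eqP ->.
by rewrite !inE.
Qed.

Lemma multsE (v : T) : mults (wheel N) v = 1.
Proof. by []. Qed.

Lemma degA_le2 F v : degA (wheel N) F v <= 2.
Proof. rewrite degAE; case: (_ \in F); case: (_ \in F) => //. Qed.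

Lemma iterS (x : T) k : val (iter k (@ordS N) x) = ((x + k) %% N)%N.
Proof.
elim: k => [|k IH] /=; first by rewrite addn0 modn_small.
by rewrite IH addnS -[(((x + k) %% N).+1)%N]addn1 modnDml addn1.
Qed.

Lemma conn (S : {set T}) : S != set0 -> S != setT -> exists2 u, u \in S & ordS u \notin S.
Proof.
move=> /set0Pn [x xS] ST.
case: (boolP [exists u in S, ordS u \notin S]) => [/existsP [u /andP [uS nu]]|h].
  by exists u.
exfalso; move/negP: ST; apply; apply/eqP/setP => y; rewrite inE.
have cl : forall u, u \in S -> ordS u \in S.
  move=> u uS; apply/negPn/negP => nu; move/negP: h; apply; apply/existsP; exists u; by rewrite uS.
have it : forall k, iter k (@ordS N) x \in S by elim=> [|k IH] //=; apply: cl.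
have -> : y = iter (y + N - x)%N (@ordS N) x.
  apply: val_inj; rewrite iterS.
  have -> : (x + (y + N - x) = y + N)%N by have := ltn_ord x; lia.
  by rewrite modnDr modn_small.
exact: it.
Qed.

Lemma connP (S : {set T}) : S != set0 -> S != setT -> exists2 u, u \in S & ord_pred u \notin S.
Proof.
move=> S0 ST.
have [w] : exists2 w, w \in ~: S & ordS w \notin ~: S.
  apply: conn.
    apply/negP => /eqP h; move/negP: ST; apply; apply/eqP; by rewrite -(setCK S) h setC0.
  apply/negP => /eqP h; move/set0Pn: S0 => [y yS].
  by have := in_setT y; rewrite -h inE yS.
rewrite !inE negbK => wS Sw; exists (ordS w) => //; by rewrite ordSK.
Qed.

Definition dist (a x : T) : nat := if (a <= x)%N then (x - a)%N else (x + N - a)%N.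

Lemma dist_lt a x : (dist a x < N)%N.
Proof. rewrite /dist; case: a x => a ha [x hx] /=; case: ifP => h; lia. Qed.
Lemma dist_inj a x y : dist a x = dist a y -> x = y.
Proof.
rewrite /dist => h; apply: val_inj; move: h; case: a x y => a ha [x hx] [y hy] /=.
case: ifP => h1; case: ifP => h2; lia.
Qed.
Lemma dist0 a x : (dist a x == 0)%N = (x == a).
Proof.
rewrite -val_eqE /dist; case: a x => a ha [x hx] /=; case: ifP => h; apply/eqP/eqP; lia.
Qed.
Lemma distaa a : dist a a = 0%N.
Proof. by apply/eqP; rewrite dist0. Qed.
Lemma distS a x : ((dist a x).+1 < N)%N -> dist a (ordS x) = (dist a x).+1.
Proof.
rewrite /dist valS; case: a x => a ha [x hx] /=.
case: (ifP (x.+1 < N)%N) => h1; case: ifP => h2; case: ifP => h3; lia.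
Qed.
Lemma distP a x : (0 < dist a x)%N -> dist a (ord_pred x) = (dist a x).-1.
Proof.
rewrite /dist valP; case: a x => a ha [x hx] /=.
case: (ifP (x == 0)%N) => h1; case: ifP => h2; case: ifP => h3; lia.
Qed.
Lemma dist_pa a : dist a (ord_pred a) = N.-1.
Proof.
rewrite /dist valP; case: a => a ha /=.
case: (ifP (a == 0)%N) => h1; case: ifP => h2; lia.
Qed.


Definition x0 : T := Ordinal (ltnW (ltnW hN)).

Lemma SR_iff (c : T -> int) :
  strongly_recurrent (wheel N) c <->
  ((forall i, c i = 1 \/ c i = 2) /\ (#|[set i | c i == 1]| <= 1)%N).
Proof.
split.
  move=> [[st nF] hM].
  have c3 : forall v, c v <= 2 by move=> v; have := st v; rewrite degE; lia.
  have [v0 hv0] : exists v0, 2 <= c v0.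
    case: (boolP [exists v, 2 <= c v]) => [/existsP [v hv] | h]; first by exists v.
    exfalso; apply: nF; exists [set: T]; split.
      by apply/set0Pn; exists x0.
    move=> v _; rewrite degAE !inE /=; move/existsPn: h => /(_ v); lia.
  have hv0M : v0 \in VM (wheel N) c by rewrite inE degE multsE; lia.
  have [_ nF'] := hM v0 hv0M.
  have cmE : forall u, u != v0 -> cminus (wheel N) c v0 u = c u - 1.
    by move=> u hu; rewrite /cminus (negbTE hu).
  have c1 : forall u, 1 <= c u.
    move=> u; case: (eqVneq u v0) => [-> | hu]; first lia.
    rewrite leNgt; apply/negP => hlt; apply: nF'; exists [set u]; split.
      by apply/set0Pn; exists u; rewrite inE.
    move=> w; rewrite inE => /eqP ->.
    rewrite cmE // degAE !inE (negbTE (ordS_neq u)) (negbTE (ordP_neq u)) /=; lia.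
  split; first by move=> i; have := c1 i; have := c3 i; lia.
  have key : forall a b, c a = 1 -> c b = 1 -> (dist v0 a < dist v0 b)%N -> False.
    move=> a b ha hb hlt.
    have av : a != v0 by apply/eqP => e; move: hv0; rewrite -e ha; lia.
    have da : (0 < dist v0 a)%N by rewrite lt0n dist0.
    have db := dist_lt v0 b.
    pose F := [set x | (dist v0 a <= dist v0 x <= dist v0 b)%N].
    apply: nF'; exists F; split.
      by apply/set0Pn; exists a; rewrite inE leqnn /= ltnW.
    move=> x; rewrite inE => /andP [h1 h2].
    have xv : x != v0 by rewrite -dist0 -lt0n; apply: leq_trans h1.
    rewrite cmE // degAE.
    have hS : (dist v0 x < dist v0 b)%N -> ordS x \in F.
      move=> hx; rewrite inE distS; last lia.
      apply/andP; split; lia.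
    have hP : (dist v0 a < dist v0 x)%N -> ord_pred x \in F.
      move=> hx; rewrite inE distP; last lia.
      apply/andP; split; lia.
    have cx := c3 x.
    case: (ltngtP (dist v0 a) (dist v0 x)) => [hax | hxa | hax].
    - rewrite (hP hax).
      case: (ltngtP (dist v0 x) (dist v0 b)) => [hxb|hbx|hxb].
      + rewrite (hS hxb) /=; lia.
      + lia.
      + have e := dist_inj _ _ _ hxb; rewrite e hb; lia.
    - lia.
    - have e := dist_inj _ _ _ hax; rewrite hS -?e //; rewrite ha; lia.
  rewrite leqNgt; apply/negP => /card_gt1P [a [b [ha hb hab]]].
  move: ha hb; rewrite !inE => /eqP ha /eqP hb.
  case: (ltngtP (dist v0 a) (dist v0 b)) => h.
  - exact: (key a b).
  - exact: (key b a).
  - by move: hab; rewrite (dist_inj _ _ _ h) eqxx.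
move=> [h12 hc].
have c1 : forall i, 1 <= c i by move=> i; case: (h12 i) => ->.
have c2 : forall i, c i <= 2 by move=> i; case: (h12 i) => ->.
have card2 : forall u1 u2, c u1 = 1 -> c u2 = 1 -> u1 = u2.
  move=> u1 u2 h1 h2; case: (eqVneq u1 u2) => // hne; exfalso.
  move: hc; rewrite leqNgt; move/negP; apply; apply/card_gt1P; exists u1, u2.
  by rewrite !inE h1 h2 eqxx.
split.
  split; first by move=> v; rewrite degE; have := c2 v; lia.
  move=> [F [F0 hF]].
  case: (eqVneq F setT) => [FT | FT].
    have all1 : forall i, c i = 1.
      move=> i; have := hF i; rewrite FT in_setT degAE !inE => /(_ isT).
      have := c1 i; lia.
    have e := card2 _ _ (all1 x0) (all1 (ordS x0)).
    by move: (ordS_neq x0); rewrite -e eqxx.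
  have [u uF nu] := conn _ F0 FT.
  have := hF u uF; rewrite degAE (negbTE nu); have := c1 u; case: (ord_pred u \in F) => /=; lia.
move=> v; rewrite inE degE multsE => hv.
have cv : c v = 2 by have := c2 v; lia.
have cmE : forall u, u != v -> cminus (wheel N) c v u = c u - 1.
  by move=> u hu; rewrite /cminus (negbTE hu).
split.
  move=> u; rewrite degE /cminus multsE; case: ifP => _; have := c2 u; lia.
move=> [F [F0 hF]].
have vF : v \notin F.
  apply/negP => vF; have := hF v vF; rewrite /cminus eqxx; have := degA_le2 F v; lia.
have FT : F != setT by apply/eqP => e; rewrite e in_setT in vF.
have [u1 u1F n1] := conn _ F0 FT.
have [u2 u2F n2] := connP _ F0 FT.
have u1v : u1 != v by apply: contraNneq vF => <-.
have u2v : u2 != v by apply: contraNneq vF => <-.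
have e1 : c u1 = 1.
  have := hF u1 u1F; rewrite cmE // degAE (negbTE n1); have := c1 u1.
  case: (_ \in F) => /=; lia.
have e2 : c u2 = 1.
  have := hF u2 u2F; rewrite cmE // degAE (negbTE n2); have := c1 u2.
  case: (_ \in F) => /=; lia.
have e := card2 _ _ e1 e2; move: n2; rewrite -e => n2.
have := hF u1 u1F; rewrite cmE // degAE (negbTE n1) (negbTE n2) e1 /=; lia.
Qed.


Lemma degA_ge0 F v : 0 <= degA (wheel N) F v.
Proof. by rewrite degAE. Qed.

Lemma PP_iff (p : T -> nat) :
  prime_parking (wheel N) p <->
  ((forall i, p i = 1%N \/ p i = 2%N) /\ (#|[set i | p i == 2%N]| <= 1)%N).
Proof.
split; last first.
  move=> [h12 hc].
  have p1 : forall i, (1 <= p i)%N by move=> i; case: (h12 i) => ->.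
  have p2 : forall i, (p i <= 2)%N by move=> i; case: (h12 i) => ->.
  have card2 : forall u1 u2, p u1 = 2%N -> p u2 = 2%N -> u1 = u2.
    move=> u1 u2 h1 h2; case: (eqVneq u1 u2) => // hne; exfalso.
    move: hc; rewrite leqNgt; move/negP; apply; apply/card_gt1P; exists u1, u2.
    by rewrite !inE h1 h2 eqxx.
  have park : parking (wheel N) p.
    split; first by move=> v _; have := p1 v; lia.
    move=> S _ S0; case: (eqVneq S setT) => [ST|ST].
      have [z hz] : exists z, p z = 1%N.
        case: (h12 x0) => h; first by exists x0.
        case: (h12 (ordS x0)) => h'; first by exists (ordS x0).
        have e := card2 _ _ h h'.
        by move: (ordS_neq x0); rewrite -e eqxx.
      exists z; first by rewrite ST in_setT.
      rewrite hz multsE; rewrite degAE; lia.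
    have [u uS nu] := conn _ S0 ST; exists u => //.
    rewrite multsE degAE !inE (negbTE nu) /=; have := p2 u; lia.
  split=> // A A0 CA0 [_ [hq _]].
  have CAT : ~: A != setT.
    apply/eqP => e; move/eqP: A0; apply; by rewrite -(setCK A) e setCT.
  have [u uA nu] := conn _ CA0 CAT.
  have [u' uA' nu'] := connP _ CA0 CAT.
  move: nu nu'; rewrite !inE !negbK => nu nu'.
  have pu : p u = 2%N.
    have := hq u uA; rewrite degAE nu; have := p2 u; have := p1 u; lia.
  have pu' : p u' = 2%N.
    have := hq u' uA'; rewrite degAE nu'; have := p2 u'; have := p1 u'; lia.
  have e := card2 _ _ pu pu'; rewrite -e in nu'.
  have := hq u uA; rewrite degAE nu nu' pu /=; lia.
move=> [[h1 hS] hpr].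
have p1 : forall v, (1 <= p v)%N by move=> v; have := h1 v (in_setT v); lia.
have p3 : forall v, (p v <= 3)%N.
  move=> v; have ne : [set v] != set0 by apply/set0Pn; exists v; rewrite inE.
  have [u] := hS [set v] (subsetT _) ne.
  rewrite inE => /eqP ->; rewrite multsE degAE; lia.
have n3 : forall v, p v != 3%N.
  move=> v; apply/eqP => pv.
  apply: (hpr (~: [set v])).
  - by apply/set0Pn; exists (ordS v); rewrite !inE ordS_neq.
  - by rewrite setCK; apply/set0Pn; exists v; rewrite inE.
  split.
  + split; first by move=> w _; have := p1 w; lia.
    move=> S SA S0.
    have vS : v \notin S.
      by apply/negP => vS; have := subsetP SA v vS; rewrite !inE eqxx.
    case: (boolP ((ordS v \in S) || (ord_pred v \in S))) => hn.
    * have ne : v |: S != set0 by apply/set0Pn; exists v; rewrite !inE eqxx.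
      have [u uvS hu] := hS (v |: S) (subsetT _) ne.
      move: uvS; rewrite !inE => /orP [/eqP uv | uS].
        move: hu; rewrite uv pv multsE degAE !inE (negbTE (ordS_neq v)) (negbTE (ordP_neq v)) /=.
        by move: hn; case: (ordS v \in S); case: (ord_pred v \in S) => //= _; lia.
      exists u => //.
      have <- : [set: T] :\: (v |: S) = ~: [set v] :\: S => //.
      apply/setP => x; rewrite !inE; by case: (x == v); case: (x \in S).
    * have [u uS hu] := hS S (subsetT _) S0; exists u => //.
      have <- : degA (wheel N) ([set: T] :\: S) u = degA (wheel N) (~: [set v] :\: S) u => //.
      rewrite !degAE !inE.
      have h1' : ordS u != v.
        by apply/eqP => e; move: hn; rewrite -e ordSK uS orbT.
      have h2' : ord_pred u != v.
        by apply/eqP => e; move: hn; rewrite -e ord_predK uS.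
      by rewrite h1' h2'.
  + rewrite setCK.
    have dv : degA (wheel N) (~: [set v]) v = 2 by rewrite degAE !inE ordS_neq ordP_neq.
    split.
      by move=> w; rewrite inE => /eqP ->; rewrite pv dv.
    move=> S Sv S0; exists v.
      case/set0Pn: S0 => y yS; have := subsetP Sv y yS; rewrite inE => /eqP e; by rewrite -e.
    rewrite pv dv multsE; rewrite degAE; lia.
have p12 : forall i, p i = 1%N \/ p i = 2%N.
  by move=> i; have := p1 i; have := p3 i; have := n3 i; lia.
split=> //.
rewrite leqNgt; apply/negP => hgt.
have [z hz] : exists z, p z = 1%N.
  have ne : [set: T] != set0 by apply/set0Pn; exists x0.
  have [u _ hu] := hS setT (subsetT _) ne.
  exists u; move: hu; rewrite setDv degAE !inE multsE; have := p1 u; lia.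
have [a pa pa'] : exists2 a, p a = 2%N & p (ord_pred a) = 1%N.
  have S10 : [set u | p u == 1%N] != set0 by apply/set0Pn; exists z; rewrite inE hz.
  have S1T : [set u | p u == 1%N] != setT.
    case/card_gt1P: hgt => x [_ [hx _ _]]; apply/eqP => e; move: hx; rewrite inE => /eqP hx.
    by have := in_setT x; rewrite -e inE hx.
  have [u uS nu] := conn _ S10 S1T.
  exists (ordS u); last by rewrite ordSK; move: uS; rewrite inE => /eqP.
  by move: nu; rewrite inE; case: (p12 (ordS u)) => ->.
have [b pb ba] : exists2 b, p b = 2%N & b != a.
  case/card_gt1P: hgt => x [y [hx hy hxy]]; move: hx hy; rewrite !inE => /eqP hx /eqP hy.
  case: (eqVneq x a) => [exa | nxa]; last by exists x.
  by exists y => //; rewrite -exa eq_sym.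
have [bm [bm2 bmax]] : exists bm, p bm = 2%N /\ forall j, p j = 2%N -> (dist a j <= dist a bm)%N.
  have Pb : (fun i => p i == 2%N) b by rewrite /= pb.
  case: (@arg_maxnP _ b (fun i => p i == 2%N) (dist a) Pb) => i /eqP pi hi; exists i; split => // j pj.
  by apply: hi; rewrite /= pj.
pose m := dist a bm.
have m1 : (0 < m)%N.
  have := bmax b pb; have : (0 < dist a b)%N by rewrite lt0n dist0.
  rewrite /m; lia.
have mN : (m < N.-1)%N.
  have := dist_lt a bm; rewrite /m; case: (ltngtP (dist a bm) N.-1) => //; try lia.
  rewrite -(dist_pa a) => e; have e' := dist_inj _ _ _ e.
  by move: bm2; rewrite e' pa'.
pose A := [set x | (m < dist a x)%N].
have CA : forall x, (x \in ~: A) = (dist a x <= m)%N by move=> x; rewrite !inE -leqNgt.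
have pA : forall x, x \in A -> p x = 1%N.
  move=> x; rewrite inE => hx; case: (p12 x) => // h; have := bmax x h; rewrite -/m; lia.
have bma : bm != a by rewrite -dist0 -lt0n.
have abm : (a == bm) = false by rewrite eq_sym (negbTE bma).
have degw : forall w, w \in ~: A -> degA (wheel N) A w = ((w == bm) + (w == a))%N%:Z.
  move=> w; rewrite CA => hw; rewrite degAE !inE.
  have -> : (m < dist a (ordS w))%N = (w == bm).
    rewrite distS; last by have := mN; lia.
    apply/idP/eqP => [h | ->]; last by rewrite ltnSn.
    by apply: (dist_inj a w bm); rewrite -/m; lia.
  have -> : (m < dist a (ord_pred w))%N = (w == a) => //.
  case: (eqVneq w a) => [-> | wa]; first by rewrite dist_pa mN.
  rewrite distP; last by rewrite lt0n dist0.
  apply/negbTE; rewrite -leqNgt; lia.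
apply: (hpr A).
- by apply/set0Pn; exists (ord_pred a); rewrite inE dist_pa.
- by apply/set0Pn; exists a; rewrite CA distaa.
split.
- split; first by move=> v _; have := p1 v; lia.
  move=> S SA /set0Pn [u uS]; exists u => //.
  rewrite (pA u (subsetP SA u uS)) multsE; rewrite degAE; lia.
- split.
  + move=> w hw; rewrite (degw w hw).
    case: (eqVneq w bm) => [->|wb]; first by rewrite ?eqxx (negbTE bma) bm2.
    case: (eqVneq w a) => [e|wa]; first by subst w; rewrite ?eqxx ?(negbTE wb) ?abm pa.
    rewrite ?(negbTE wb) ?(negbTE wa) /=; have := p1 w; lia.
  + move=> S SA S0.
    case: (boolP (a \in S)) => aS.
      exists a => //; rewrite (degw a (subsetP SA a aS)) abm eqxx pa multsE.
      rewrite degAE; lia.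
    case: (boolP (bm \in S)) => bS.
      exists bm => //; rewrite (degw bm (subsetP SA bm bS)) (negbTE bma) eqxx bm2 multsE.
      rewrite degAE; lia.
    have ST : S != setT by apply/eqP => e; rewrite e in_setT in aS.
    have [u uS nu] := conn _ S0 ST; exists u => //.
    have uA := subsetP SA u uS.
    have ub : u != bm by apply: contraNneq bS => <-.
    have ua : u != a by apply: contraNneq aS => <-.
    rewrite (degw u uA) (negbTE ub) (negbTE ua) multsE degAE.
    have hu : (dist a u <= m)%N by rewrite -CA.
    have hum : dist a u != m.
      by apply/eqP => e; move/eqP: ub; apply; exact: dist_inj _ _ _ e.
    have -> : ordS u \in ~: A :\: S.
      have h1u : ((dist a u).+1 <= N.-1)%N by apply: leq_trans mN; rewrite ltnS.
      rewrite in_setD nu /= CA distS; first by rewrite ltn_neqAle hum hu.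
      apply: leq_ltn_trans h1u _; rewrite ltn_predL; exact: (ltnW (ltnW hN)).
    case: (p12 u) => ->; case: (ord_pred u \in _) => /=; clear -hN; lia.
Qed.

End W.

Lemma list_char (N : nat) (V : eqType) (x y : V) (hxy : x != y) :
  let s := [ffun=> x] :: [seq [ffun j : 'I_N => if j == i then y else x] | i <- enum 'I_N] in
  [/\ uniq s, size s = N.+1 &
     forall f : {ffun 'I_N -> V}, f \in s <->
       ((forall i, f i = x \/ f i = y) /\ (#|[set i | f i == y]| <= 1)%N)].
Proof.
move=> s; split.
- rewrite /s cons_uniq; apply/andP; split.
    apply/mapP => -[i _ e].
    have := congr1 (fun f : {ffun 'I_N -> V} => f i) e; rewrite /= !ffunE eqxx => exy.
    by rewrite exy eqxx in hxy.
  rewrite map_inj_uniq ?enum_uniq // => i j e.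
  have := congr1 (fun f : {ffun 'I_N -> V} => f i) e; rewrite /= !ffunE eqxx.
  case: eqP => [-> //|_ eyx]; by rewrite eyx eqxx in hxy.
- by rewrite /= size_map size_enum_ord.
move=> f; split.
  rewrite inE => /orP [/eqP -> | /mapP [i _ ->]].
    split; first by move=> i; rewrite ffunE; left.
    rewrite (_ : [set i | _] = set0) ?cards0 //; apply/setP => i.
    by rewrite !inE ffunE (negbTE hxy).
  split; first by move=> j; rewrite ffunE; case: eqP; [right|left].
  rewrite (_ : [set j | _] = [set i]) ?cards1 //; apply/setP => j.
  by rewrite !inE ffunE; case: (j == i); rewrite ?eqxx ?(negbTE hxy).
move=> [h12 hc]; rewrite inE.
case: (posnP #|[set i | f i == y]|) => [c0|cpos].
  apply/orP; left; apply/eqP/ffunP => i; rewrite ffunE.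
  case: (h12 i) => // fy; exfalso.
  by move/eqP: c0; rewrite cards_eq0 => /eqP/setP/(_ i); rewrite !inE fy eqxx.
have c1 : #|[set i | f i == y]| == 1%N by rewrite eqn_leq hc cpos.
case/cards1P: c1 => i hi.
apply/orP; right; apply/mapP; exists i; first by rewrite mem_enum.
apply/ffunP => j; rewrite ffunE.
have hj : (f j == y) = (j == i) by move: (hi) => /setP/(_ j); rewrite !inE.
case: (h12 j) => fj; rewrite fj in hj *.
  by rewrite (negbTE hxy) in hj; rewrite -hj.
by rewrite eqxx in hj; rewrite -hj.
Qed.

Theorem proposition3p3 (n : nat) (hn : (3 <= n)%N) :
  (forall c : {ffun 'I_n -> int},
     strongly_recurrent (wheel n) c <->
     ((forall i, c i = 1 \/ c i = 2) /\ (#|[set i | c i == 1]| <= 1)%N)) /\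
  (exists s : seq {ffun 'I_n -> int},
     [/\ uniq s, size s = n.+1 &
         forall c, c \in s <-> strongly_recurrent (wheel n) c]) /\
  (exists s : seq {ffun 'I_n -> nat},
     [/\ uniq s, size s = n.+1 &
         forall p, p \in s <-> prime_parking (wheel n) p]).
Proof.
split; first by move=> c; exact: (@SR_iff n hn c).
split.
  have h21 : (2 : int) != 1 by [].
  have [hu hs hm] := @list_char n _ _ _ h21.
  eexists; split; [exact: hu | exact: hs | move=> c].
  split.
    move/hm => [h1 h2]; apply/(@SR_iff n hn c); split => // i.
    by case: (h1 i); [right|left].
  move/(@SR_iff n hn c) => [h1 h2]; apply/hm; split => // i.
  by case: (h1 i); [right|left].
have h12 : (1 != 2)%N by [].
have [hu hs hm] := @list_char n _ _ _ h12.
eexists; split; [exact: hu | exact: hs | move=> p].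
split.
  by move/hm => h; apply/(@PP_iff n hn p).
by move/(@PP_iff n hn p) => h; apply/hm.
Qed.
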